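(* Let $l_1,m_1,l_2,m_2,n$ be positive integers with $l_1\le m_1<l_2\le m_2$. Let $\Psi(l_1,m_1,l_2,m_2,n)$ be the number of subsets $X\subseteq[l_1,m_1]\cup[l_2,m_2]$ with $l_1\in X$, $l_2\in X$ and $\gcd(X\cup\{n\})=1$, and for an integer $k\ge 2$ let $\Psi_k(l_1,m_1,l_2,m_2,n)$ be the number of such subsets that moreover have exactly $k$ elements. Then \[ \text{(a)}\quad \Psi(l_1,m_1,l_2,m_2,n)=\sum_{d\mid \gcd(l_1,l_2,n)}\mu(d)\,2^{\lfloor m_1/d\rfloor+\lfloor m_2/d\rfloor-(l_1+l_2)/d}, \] \[ \text{(b)}\quad \Psi_k(l_1,m_1,l_2,m_2,n)=\sum_{d\mid \gcd(l_1,l_2,n)}\mu(d)\binom{\lfloor m_1/d\rfloor+\lfloor m_2/d\rfloor-(l_1+l_2)/d}{k-2}. \]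
   Context: $[l,m]=\{l,l+1,\ldots,m\}$ for positive integers $l\le m$. $\mu$ is the Möbius function, $\lfloor x\rfloor$ the floor function, and $\gcd(S)$ the greatest common divisor of a finite nonempty set $S$ of positive integers. *)

(* Defs.v *)
From HB Require Import structures.
From mathcomp Require Import all_boot all_order all_algebra.
Set Implicit Arguments. Unset Strict Implicit. Unset Printing Implicit Defensive.
Import Order.TTheory GRing.Theory Num.Theory.

(* Moebius function: mu(n) = (-1)^(number of prime factors) if n is squarefree,
   0 otherwise (mu(1) = 1). Only used for n >= 1. *)
Definition mobius (n : nat) : int :=
  if all (fun p => logn p n == 1%N) (primes n)
  then ((-1) ^+ size (primes n))%R else 0%R.

Definition gcd_set (N : nat) (X : {set 'I_N}) : nat :=
  \big[gcdn/0%N]_(x in X) (val x).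

Definition admissible (l1 m1 l2 m2 n : nat) (X : {set 'I_m2.+1}) : bool :=
  [&& [forall x in X, ((l1 <= x <= m1) || (l2 <= x <= m2))%N],
      [exists x in X, val x == l1],
      [exists x in X, val x == l2] &
      gcdn (gcd_set X) n == 1%N].

Definition Psi (l1 m1 l2 m2 n : nat) : nat :=
  #|[set X : {set 'I_m2.+1} | @admissible l1 m1 l2 m2 n X]|.

Definition Psi_k (k l1 m1 l2 m2 n : nat) : nat :=
  #|[set X : {set 'I_m2.+1} | @admissible l1 m1 l2 m2 n X & #|X| == k]|.

(* Main.v *)
Require Import Defs.
From HB Require Import structures.
From mathcomp Require Import all_boot all_order all_algebra.
Import Order.TTheory GRing.Theory Num.Theory.
Set Implicit Arguments. Unset Strict Implicit.

Lemma cnt_mid d l k : 0 < d -> d %| l ->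
  \sum_(l <= i < (l + k).+1) (d %| i : nat) = ((l + k) %/ d - l %/ d).+1.
Proof.
move=> d0 dl; elim: k => [|k IH].
  by rewrite addn0 big_nat1 dl subnn.
rewrite addnS big_nat_recr /=; last by rewrite ltnW // ltnS leq_addr.
rewrite IH divnS // addSn addnBAC ?leq_div2r ?leq_addr // addnC //.
Qed.

Lemma card_mult N d l m : 0 < d -> d %| l -> l <= m -> m < N ->
  #|[set x : 'I_N | (l <= x <= m) && (d %| x)]| = (m %/ d - l %/ d).+1.
Proof.
move=> d0 dl lm mN.
rewrite -sum1dep_card big_mkcond /=.
rewrite -(big_mkord xpredT (fun i => if (l <= i <= m) && (d %| i) then 1 else 0)).
rewrite (big_cat_nat _ (n := l)) //=; last by rewrite (leq_trans lm) // ltnW.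
rewrite [X in _ + X](big_cat_nat _ (n := m.+1)) //=.
rewrite big1_seq ?add0n; last first.
  by move=> i; rewrite mem_index_iota => /andP[_ /andP[_ il]]; rewrite leqNgt il.
rewrite [X in _ + X]big1_seq ?addn0; last first.
  by move=> i; rewrite mem_index_iota => /andP[_ /andP[mi _]]; rewrite (leqNgt i m) mi andbF.
have := cnt_mid (m - l) d0 dl; rewrite subnKC // => <-.
apply: eq_big_nat => i /andP[li im]; rewrite li -ltnS im.
  by case: (d %| i).
by rewrite ltnW.
Qed.

Lemma shift_count (T : finType) (B S : {set T}) (P : nat -> bool) : B \subset S ->
  #|[set X : {set T} | (B \subset X) && (X \subset S) && P #|X|]| =
  #|[set Y : {set T} | (Y \subset S :\: B) && P (#|Y| + #|B|)%N]|.
Proof.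
move=> BS.
pose A := [set Y : {set T} | (Y \subset S :\: B) && P (#|Y| + #|B|)%N].
have cardU : forall Y, Y \in A -> #|Y :|: B| = (#|Y| + #|B|)%N.
  move=> Y; rewrite /A inE. rewrite subsetD => /andP[/andP[_ dY] _].
  by rewrite cardsU disjoint_setI0 // cards0 subn0.
have inj : {in A &, injective (fun Y => Y :|: B)}.
  move=> Y1 Y2; rewrite /A !inE !subsetD => /andP[/andP[_ d1] _] /andP[/andP[_ d2] _] e.
  have : (Y1 :|: B) :\: B = (Y2 :|: B) :\: B by rewrite e.
  by rewrite !setDUl setDv !setU0 (setDidPl d1) (setDidPl d2).
rewrite -(card_in_imset inj); apply: eq_card => X; rewrite inE.
apply/idP/imsetP => [/andP[/andP[BX XS] PX]|[Y YA ->]].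
  have eX : (X :\: B) :|: B = X.
    apply/setP => x; rewrite !inE; case xB: (x \in B); rewrite ?orbT ?orbF //.
    by rewrite (subsetP BX).
  exists (X :\: B); last by rewrite eX.
  rewrite inE subsetD (subset_trans (subsetDl _ _) XS) /=.
  have -> : [disjoint X :\: B & B].
    by rewrite -setI_eq0; apply/eqP/setP => x; rewrite !inE; case: (x \in B); rewrite ?andbF.
  by rewrite cardsD (setIidPr BX) subnK // subset_leq_card.
move: (YA); rewrite /A inE subsetD => /andP[/andP[YS _] PY].
rewrite subsetUr subUset BS YS /= cardU //.
Qed.

Lemma count_sets m2 l1 m1 l2 d (P : nat -> bool) :
  0 < l1 -> l1 <= m1 -> m1 < l2 -> l2 <= m2 -> 0 < d -> d %| l1 -> d %| l2 ->
  exists A : {set 'I_m2.+1},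
   #|A| = m1 %/ d + m2 %/ d - (l1 + l2) %/ d /\
   #|[set X : {set 'I_m2.+1} |
      ([&& [forall x in X, (l1 <= x <= m1) || (l2 <= x <= m2)],
           [exists x in X, val x == l1] & [exists x in X, val x == l2]]
        && P #|X|) && [forall x in X, d %| val x]]|
   = #|[set Y : {set 'I_m2.+1} | (Y \subset A) && P (#|Y| + 2)]|.
Proof.
move=> l10 h1 h2 h3 d0 dl1 dl2.
have l1N : l1 < m2.+1 by rewrite ltnS (leq_trans h1) // ltnW // (leq_trans h2).
have l2N : l2 < m2.+1 by rewrite ltnS.
pose a : 'I_m2.+1 := Ordinal l1N.
pose b : 'I_m2.+1 := Ordinal l2N.
pose S1 := [set x : 'I_m2.+1 | (l1 <= x <= m1) && (d %| x)].
pose S2 := [set x : 'I_m2.+1 | (l2 <= x <= m2) && (d %| x)].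
pose S := S1 :|: S2.
pose B := [set a; b].
have ab : a != b by apply/eqP => /(congr1 val) /= e; by rewrite -e ltnNge h1 in h2.
have BS : B \subset S.
  apply/subsetP => x; rewrite !inE => /orP[] /eqP -> /=.
  - by rewrite dl1 leqnn h1.
  - by rewrite dl2 leqnn h3 orbT.
exists (S :\: B); split.
  rewrite cardsD (setIidPr BS) cards2 ab cardsU.
  have -> : S1 :&: S2 = set0.
    apply/setP => x; rewrite !inE.
    case: (leqP l1 x) => //= _; case: (leqP x m1) => //= xm1.
    by rewrite (leqNgt l2) (leq_ltn_trans xm1 h2) andbF.
  rewrite cards0 subn0 !card_mult // ?(ltnW (leq_trans h2 h3)) //; last first.
    by rewrite ltnS (ltnW (leq_trans h2 h3)).
  rewrite addSn addnS /= !subSS !subn0 (divnDl _ dl1).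
  rewrite addnBA ?leq_div2r // addnBAC ?leq_div2r // subnDA //.
have -> : 2 = #|B| by rewrite cards2 ab.
rewrite -(shift_count P BS); apply: eq_card => X; rewrite !inE.
have ea : [exists x in X, val x == l1] = (a \in X).
  apply/exists_inP/idP => [[x xX /eqP ex]|aX]; last by exists a.
  by have <- : x = a by apply: val_inj.
have eb : [exists x in X, val x == l2] = (b \in X).
  apply/exists_inP/idP => [[x xX /eqP ex]|bX]; last by exists b.
  by have <- : x = b by apply: val_inj.
have eS : (X \subset S) = [forall x in X, (l1 <= x <= m1) || (l2 <= x <= m2)] &&
                          [forall x in X, d %| val x].
  apply/subsetP/andP => [H|[/forall_inP H1 /forall_inP H2] x xX].
    split; apply/forall_inP => x xX; move: (H x xX); rewrite !inE.
      by case/orP => /andP[-> _]; rewrite ?orbT.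
    by case/orP => /andP[_ ->].
  by rewrite !inE (H2 x xX) !andbT (H1 x xX).
rewrite ea eb eS /B subUset !sub1set.
by case: (a \in X); case: (b \in X); case: (P #|X|);
   case: [forall x in X, d %| val x]; rewrite ?andbT ?andbF.
Qed.

Local Open Scope ring_scope.

Lemma mobius_sq0 p d : prime p -> (0 < d)%N -> (p ^ 2 %| d)%N -> mobius d = 0.
Proof.
move=> pp d0 hd; rewrite /mobius; case: ifP => // /allP H.
have Hp : p \in primes d by rewrite mem_primes pp d0 (dvdn_trans _ hd) // dvdn_exp.
move: (H p Hp) => /eqP e1; rewrite pfactor_dvdn // e1 in hd; done.
Qed.

Lemma mobius_mulp p d : prime p -> (0 < d)%N -> ~~ (p %| d)%N ->
  mobius (p * d) = - mobius d.
Proof.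
move=> pp d0 nd.
have p0 : (0 < p)%N by apply: prime_gt0.
have pe : perm_eq (primes (p * d)) (p :: primes d).
  apply: uniq_perm; first exact: primes_uniq.
    by rewrite /= primes_uniq andbT mem_primes pp d0 nd.
  by move=> q; rewrite primesM // primes_prime // !inE.
rewrite /mobius (perm_size pe) (@perm_all _ _ _ _ pe) /= lognM // logn_prime // eqxx.
have -> : logn p d = 0%N by apply/eqP; rewrite -leqn0 leqNgt logn_gt0 mem_primes pp d0 nd.
have -> : all (fun q => logn q (p * d) == 1%N) (primes d) = all (fun q => logn q d == 1%N) (primes d).
  apply: eq_in_all => q; rewrite mem_primes => /and3P[qp _ qd].
  rewrite lognM // logn_prime //.
  have -> : (q == p) = false by apply/eqP => eqp; rewrite -eqp qd in nd.
  by rewrite add0n.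
rewrite /=; case: ifP => _; first by rewrite exprS mulN1r. by rewrite oppr0.
Qed.

Definition tog p i := if (p %| i)%N then (i %/ p)%N else (p * i)%N.

Lemma mobius_sum m : (0 < m)%N ->
  \sum_(d < m.+1 | (d %| m)%N) mobius d = (m == 1%N)%:R.
Proof.
move=> m0; case: (ltngtP m 1) => [|m1|->]; first by rewrite ltnNge m0.
  pose p := pdiv m.
  have pp : prime p by apply: pdiv_prime.
  have pm : (p %| m)%N by apply: pdiv_dvd.
  have p0 : (0 < p)%N by apply: prime_gt0.
  rewrite /=.
  rewrite (bigID (fun d : 'I_m.+1 => (p ^ 2 %| d)%N)) /=.
  rewrite [X in X + _]big1 ?add0r; last first.
    by move=> i /andP[im ip]; rewrite (mobius_sq0 pp (dvdn_gt0 m0 im) ip).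
  set Q := (fun i : 'I_m.+1 => (i %| m)%N && ~~ (p ^ 2 %| i)%N).
  have Qt : forall i : nat, (i %| m)%N && ~~ (p ^ 2 %| i)%N ->
     [&& (tog p i %| m)%N, ~~ (p ^ 2 %| tog p i)%N, tog p (tog p i) == i &
         mobius (tog p i) == - mobius i].
    move=> i /andP[im ip2]; have i0 : (0 < i)%N by apply: dvdn_gt0 im.
    rewrite /tog; case: ifP => pi.
      have ei : (p * (i %/ p))%N = i by rewrite mulnC divnK.
      have npi : ~~ (p %| i %/ p)%N.
        apply/negP => h; move: ip2; rewrite -ei expnS expn1 dvdn_pmul2l // h //.
      have ip0 : (0 < i %/ p)%N by rewrite divn_gt0 // dvdn_leq.
      rewrite (negbTE npi) ei eqxx /=.
      have dii : (i %/ p %| i)%N by rewrite -{2}ei dvdn_mull.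
      rewrite (dvdn_trans dii im) /=.
      rewrite -[mobius i](congr1 mobius ei) (mobius_mulp pp ip0 npi) opprK eqxx andbT.
      by apply/negP => h; move/negP: npi; apply; apply: dvdn_trans h; rewrite dvdn_exp.
    rewrite (dvdn_mulr i (dvdnn p)) mulKn // eqxx /= (mobius_mulp pp i0 (negbT pi)) eqxx andbT.
    rewrite Gauss_dvd ?prime_coprime ?pi // pm im /=.
    by rewrite expnS expn1 dvdn_pmul2l // pi.
  pose h (i : 'I_m.+1) : 'I_m.+1 := if Q i then inord (tog p i) else i.
  have hval : forall i, Q i -> val (h i) = tog p i.
    move=> i Qi; rewrite /h Qi /= inordK //.
    case/and4P: (Qt _ Qi) => tm _ _ _; rewrite ltnS dvdn_leq //.
  have hQ : forall i, Q (h i) = Q i.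
    move=> i; case Qi: (Q i); last by rewrite /h Qi.
    by rewrite /Q hval //; case/and4P: (Qt _ Qi) => -> -> _ _.
  have hh : forall i, h (h i) = i.
    move=> i; case Qi: (Q i); last by rewrite /h !Qi.
    apply: val_inj; rewrite hval ?hQ // hval //.
    by case/and4P: (Qt _ Qi) => _ _ /eqP -> _.
  have hinj : injective h by apply: (can_inj hh).
  set S := \sum_(i | Q i) mobius i.
  have SS : S = - S.
    rewrite {1}/S (reindex_inj hinj) /= (eq_bigl Q) // /S -sumrN.
    apply: eq_bigr => i Qi.
    by rewrite hval //; case/and4P: (Qt _ Qi) => _ _ _ /eqP.
  have : S *+ 2 == 0 by rewrite mulr2n {1}SS addNr.
  by rewrite mulrn_eq0 /= => /eqP.
rewrite big_mkcond !big_ord_recr big_ord0 /=.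
by [].
Qed.

Lemma divisors_sum (F : nat -> int) m N : (0 < m)%N -> (m <= N)%N ->
  \sum_(d <- divisors m) F d = \sum_(d < N.+1 | (d %| m)%N) F d.
Proof.
move=> m0 mN; rewrite -(big_mkord (fun d => (d %| m)%N)) -big_filter.
apply: perm_big; apply: uniq_perm.
- exact: divisors_uniq.
- by rewrite filter_uniq // iota_uniq.
move=> d; rewrite mem_filter mem_iota add0n -dvdn_divisors //.
case dm: (d %| m)%N => //=; rewrite ltnS (leq_trans (dvdn_leq m0 dm) mN) //.
Qed.

Lemma card_int (T : finType) (P : pred T) :
  (#|[set x | P x]|)%:Z = \sum_(x | P x) 1.
Proof.
rewrite -sum1dep_card; apply: (big_morph Posz PoszD (erefl 0%:Z)).
Qed.

Lemma inv_count N (R : pred {set 'I_N}) n G :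
  (0 < n)%N -> (0 < G)%N ->
  (forall X, R X -> (0 < gcd_set X)%N /\ (gcd_set X %| G)%N) ->
  (#|[set X | R X && (gcdn (gcd_set X) n == 1%N)]|)%:Z =
  \sum_(d <- divisors (gcdn G n))
     mobius d * (#|[set X | R X && [forall x in X, (d %| val x)%N]]|)%:Z.
Proof.
move=> n0 G0 hR.
have g0 : (0 < gcdn G n)%N by rewrite gcdn_gt0 G0.
have gle : (gcdn G n <= n)%N by apply: dvdn_leq => //; apply: dvdn_gcdr.
rewrite (divisors_sum _ g0 gle).
rewrite card_int big_mkcondr /=.
have -> : \sum_(X | R X) (if (gcdn (gcd_set X) n == 1%N) then 1 else 0 : int) =
   \sum_(X | R X) \sum_(d < n.+1 | (d %| gcdn G n)%N)
        (if (d %| gcd_set X)%N then mobius d else 0).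
  apply: eq_bigr => X RX; case: (hR X RX) => gX gG.
  have gn0 : (0 < gcdn (gcd_set X) n)%N by rewrite gcdn_gt0 gX.
  have gnle : (gcdn (gcd_set X) n <= n)%N by apply: dvdn_leq => //; apply: dvdn_gcdr.
  have -> : (if (gcdn (gcd_set X) n == 1%N) then 1 else 0 : int) =
     ((gcdn (gcd_set X) n == 1%N)%:R : int) by case: eqP.
  rewrite -big_mkcondr -mobius_sum // /=.
  rewrite -(divisors_sum _ gn0 (leqnn _)) (divisors_sum _ gn0 gnle).
  apply: eq_bigl => d; rewrite !dvdn_gcd.
  case dg: (d %| gcd_set X)%N; last by rewrite andbF.
  by rewrite (dvdn_trans dg gG) andbT.
rewrite exchange_big /=; apply: eq_bigr => d dG.
rewrite card_int big_distrr /= -big_mkcondr /=; apply: eq_big => [X|X _].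
  by congr (_ && _); apply/dvdn_biggcdP/forall_inP.
by rewrite mulr1.
Qed.


Theorem lemma1 (l1 m1 l2 m2 n : nat)
  (hl1 : (0 < l1)%N) (hn : (0 < n)%N)
  (h1 : (l1 <= m1)%N) (h2 : (m1 < l2)%N) (h3 : (l2 <= m2)%N) :
  ((Psi l1 m1 l2 m2 n)%:Z =
     \sum_(d <- divisors (gcdn (gcdn l1 l2) n))
        mobius d * (2 ^ (m1 %/ d + m2 %/ d - (l1 + l2) %/ d))%N%:Z)
  /\
  (forall k : nat, (2 <= k)%N ->
     (Psi_k k l1 m1 l2 m2 n)%:Z =
     \sum_(d <- divisors (gcdn (gcdn l1 l2) n))
        mobius d * ('C(m1 %/ d + m2 %/ d - (l1 + l2) %/ d, k - 2))%N%:Z).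
Proof.
pose R0 (X : {set 'I_m2.+1}) := [&& [forall x in X, ((l1 <= x <= m1) || (l2 <= x <= m2))%N],
           [exists x in X, val x == l1] & [exists x in X, val x == l2]].
have G0 : (0 < gcdn l1 l2)%N by rewrite gcdn_gt0 hl1.
have g0 : (0 < gcdn (gcdn l1 l2) n)%N by rewrite gcdn_gt0 G0.
have key : forall (P : nat -> bool) (f : nat -> nat),
   (forall A : {set 'I_m2.+1}, #|[set Y : {set 'I_m2.+1} | (Y \subset A) && P (#|Y| + 2)%N]| = f #|A|) ->
   (#|[set X | (R0 X && P #|X|) && (gcdn (gcd_set X) n == 1%N)]|)%:Z =
   \sum_(d <- divisors (gcdn (gcdn l1 l2) n))
        mobius d * (f (m1 %/ d + m2 %/ d - (l1 + l2) %/ d)%N)%:Z.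
  move=> P f hf.
  rewrite (@inv_count _ (fun X => R0 X && P #|X|) n (gcdn l1 l2) hn G0); last first.
    move=> X /andP[/and3P[_ /exists_inP[x xX /eqP e1] /exists_inP[y yX /eqP e2]] _].
    have g1 : (gcd_set X %| l1)%N by rewrite -e1; apply: (biggcdn_inf x).
    have g2 : (gcd_set X %| l2)%N by rewrite -e2; apply: (biggcdn_inf y).
    by split; [apply: dvdn_gt0 g1 | rewrite dvdn_gcd g1 g2].
  apply: eq_big_seq => d; rewrite -dvdn_divisors // => dg.
  have d0 : (0 < d)%N by apply: dvdn_gt0 g0 dg.
  have dl1 : (d %| l1)%N by apply: (dvdn_trans dg); apply: (dvdn_trans (dvdn_gcdl _ _)); apply: dvdn_gcdl.
  have dl2 : (d %| l2)%N by apply: (dvdn_trans dg); apply: (dvdn_trans (dvdn_gcdl _ _)); apply: dvdn_gcdr.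
  have [A [cA eA]] := count_sets P hl1 h1 h2 h3 d0 dl1 dl2.
  by congr (_ * Posz _); rewrite -cA -hf -eA.
split.
  have hf : forall A : {set 'I_m2.+1}, #|[set Y : {set 'I_m2.+1} | (Y \subset A) && true]| = (2 ^ #|A|)%N.
    by move=> A; rewrite -card_powerset; apply: eq_card => Y; rewrite !inE andbT.
  rewrite -(key (fun _ => true) (fun s => 2 ^ s)%N hf).
  rewrite /Psi; congr Posz; apply: eq_card => X; rewrite !inE /admissible /R0 andbT.
  by rewrite !andbA.
move=> k hk.
have hf : forall A : {set 'I_m2.+1}, #|[set Y : {set 'I_m2.+1} | (Y \subset A) && (#|Y| + 2 == k)%N]| = 'C(#|A|, k - 2).
  move=> A; rewrite -cards_draws; apply: eq_card => Y; rewrite !inE.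
  by rewrite -{1}(subnK hk) eqn_add2r.
rewrite -(key (fun j => j == k) (fun s => 'C(s, k - 2)) hf).
rewrite /Psi_k; congr Posz; apply: eq_card => X; rewrite !inE /admissible /R0.
by case: [forall x in X, _]; case: [exists x in X, _]; case: [exists x in X, _];
   case: (_ == 1%N); case: (_ == k); rewrite ?andbT ?andbF.
Qed.
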